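(* Let $\mathcal H_1,\dots,\mathcal H_7,\mathcal H_E$ be finite-dimensional complex Hilbert spaces and $|\psi\rangle\in\mathcal H_1\otimes\cdots\otimes\mathcal H_7\otimes\mathcal H_E$. For each $k\in[7]$ let $X_k,Z_k$ be Hermitian operators on $\mathcal H_k$ (extended by the identity to the whole space). Define $\tilde S_1=X_4X_5X_6X_7$, $\tilde S_2=X_2X_3X_6X_7$, $\tilde S_3=X_1X_3X_5X_7$, $\tilde S_4=X_1X_2X_5X_6$, $\tilde S_5=Z_4Z_5Z_6Z_7$, $\tilde S_6=Z_2Z_3Z_6Z_7$, $\tilde S_7=Z_1Z_3Z_5Z_7$, $\tilde S_8=Z_1Z_2Z_5Z_6$. Assume (i) $X_kZ_k+Z_kX_k=0$ for $k\in\{2,3,5,7\}$; (ii) $\tilde S_k|\psi\rangle=|\psi\rangle$ for all $k\in[8]$; (iii) $X_k^2=Z_k^2=I$ for $k\in\{1,4,6\}$. Then for every $k\in[7]$: $X_k^2|\psi\rangle=Z_k^2|\psi\rangle=|\psi\rangle$ and $(X_kZ_k+Z_kX_k)|\psi\rangle=0$.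
   Context: Operators acting on different tensor factors commute. *)

(* Defs.v *)
From HB Require Import structures.
From mathcomp Require Import all_boot all_order all_algebra.
From mathcomp Require Export mxtens.
Set Implicit Arguments. Unset Strict Implicit. Unset Printing Implicit Defensive.
Import Order.TTheory GRing.Theory Num.Theory.
Local Open Scope ring_scope.

(* Finite-dimensional complex Hilbert spaces H_1,...,H_7,H_E are modelled as
   C^(d1), ..., C^(d7), C^(dE) over a numeric algebraically closed field C
   (e.g. complex R for R : realType, or algC).  The total space
   H_1 (x) ... (x) H_7 (x) H_E is C^(d1*(d2*(...*(d7*dE)))) via the Kronecker
   product tensmx (notation *t) of mxtens. *)

Definition totdim (d1 d2 d3 d4 d5 d6 d7 dE : nat) : nat :=
  d1 * (d2 * (d3 * (d4 * (d5 * (d6 * (d7 * dE)))))).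

Definition hermitian_op (C : numClosedFieldType) (n : nat) (A : 'M[C]_n) : Prop :=
  map_mx Num.conj (A^T) = A.

Section Lifts.
Variables (C : numClosedFieldType) (d1 d2 d3 d4 d5 d6 d7 dE : nat).
Local Notation I n := (1%:M : 'M[C]_n).

Definition lift1 (A : 'M[C]_d1) : 'M[C]_(totdim d1 d2 d3 d4 d5 d6 d7 dE) :=
  A *t I (d2 * (d3 * (d4 * (d5 * (d6 * (d7 * dE)))))).
Definition lift2 (A : 'M[C]_d2) : 'M[C]_(totdim d1 d2 d3 d4 d5 d6 d7 dE) :=
  I d1 *t (A *t I (d3 * (d4 * (d5 * (d6 * (d7 * dE)))))).
Definition lift3 (A : 'M[C]_d3) : 'M[C]_(totdim d1 d2 d3 d4 d5 d6 d7 dE) :=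
  I d1 *t (I d2 *t (A *t I (d4 * (d5 * (d6 * (d7 * dE)))))).
Definition lift4 (A : 'M[C]_d4) : 'M[C]_(totdim d1 d2 d3 d4 d5 d6 d7 dE) :=
  I d1 *t (I d2 *t (I d3 *t (A *t I (d5 * (d6 * (d7 * dE)))))).
Definition lift5 (A : 'M[C]_d5) : 'M[C]_(totdim d1 d2 d3 d4 d5 d6 d7 dE) :=
  I d1 *t (I d2 *t (I d3 *t (I d4 *t (A *t I (d6 * (d7 * dE)))))).
Definition lift6 (A : 'M[C]_d6) : 'M[C]_(totdim d1 d2 d3 d4 d5 d6 d7 dE) :=
  I d1 *t (I d2 *t (I d3 *t (I d4 *t (I d5 *t (A *t I (d7 * dE)))))).
Definition lift7 (A : 'M[C]_d7) : 'M[C]_(totdim d1 d2 d3 d4 d5 d6 d7 dE) :=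
  I d1 *t (I d2 *t (I d3 *t (I d4 *t (I d5 *t (I d6 *t (A *t I dE)))))).
End Lifts.

Definition local_conclusion (C : numClosedFieldType) (dk N : nat)
  (L : 'M[C]_dk -> 'M[C]_N) (X Z : 'M[C]_dk) (psi : 'cV[C]_N) : Prop :=
  [/\ L (X *m X) *m psi = psi,
      L (Z *m Z) *m psi = psi &
      L (X *m Z + Z *m X) *m psi = 0].

(* Main.v *)
Require Import Defs.
From HB Require Import structures.
From mathcomp Require Import all_boot all_order all_algebra.
From mathcomp Require Import mxtens.
Import Order.TTheory GRing.Theory Num.Theory.
Local Open Scope ring_scope.

Section Tens.
Variable C : numClosedFieldType.

Lemma tens11 m n : (1%:M : 'M[C]_m) *t (1%:M : 'M[C]_n) = 1%:M.
Proof.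
apply/matrixP=> i j.
case: (mxtens_indexP i)=> i0 i1; case: (mxtens_indexP j)=> j0 j1.
rewrite tensmxE !mxE -natrM mulnb; congr (_ %:R); congr nat_of_bool.
apply/andP/eqP => [[/eqP-> /eqP->]//|].
by move/(can_inj (@mxtens_indexK _ _)) => [-> ->].
Qed.

Lemma tensmxDl m n p q (A B : 'M[C]_(m,n)) (D : 'M[C]_(p,q)) :
  (A + B) *t D = A *t D + B *t D.
Proof. by apply/matrixP=> i j; rewrite !mxE mulrDl. Qed.
Lemma tensmxDr m n p q (A B : 'M[C]_(m,n)) (D : 'M[C]_(p,q)) :
  D *t (A + B) = D *t A + D *t B.
Proof. by apply/matrixP=> i j; rewrite !mxE mulrDr. Qed.
Lemma tensmxNl m n p q (A : 'M[C]_(m,n)) (D : 'M[C]_(p,q)) :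
  (- A) *t D = - (A *t D).
Proof. by apply/matrixP=> i j; rewrite !mxE mulNr. Qed.
Lemma tensmxNr m n p q (A : 'M[C]_(m,n)) (D : 'M[C]_(p,q)) :
  D *t (- A) = - (D *t A).
Proof. by apply/matrixP=> i j; rewrite !mxE mulrN. Qed.

Lemma herm1 n : hermitian_op (1%:M : 'M[C]_n).
Proof. by apply/matrixP=> i j; rewrite !mxE rmorph_nat eq_sym. Qed.

Lemma hermT m n (A : 'M[C]_m) (B : 'M[C]_n) :
  hermitian_op A -> hermitian_op B -> hermitian_op (A *t B).
Proof.
rewrite /hermitian_op => hA hB.
by rewrite trmx_tens map_mxT hA hB.
Qed.

Lemma pos_sq N (M : 'M[C]_N) (v : 'cV[C]_N) : hermitian_op M ->
  (M *m M) *m ((M *m M) *m v) = v -> (M *m M) *m v = v.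
Proof.
move=> hM h.
set u := (M *m M) *m v - v.
have Pu : (M *m M) *m u = - u.
  by rewrite /u mulmxBr h opprB.
have key : map_mx Num.conj u^T *m (M *m (M *m u)) = map_mx Num.conj (M *m u)^T *m (M *m u).
  by rewrite trmx_mul map_mxM hM mulmxA.
rewrite [M *m (M *m u)]mulmxA Pu mulmxN in key.
have := congr1 (fun A : 'M[C]_1 => A 0 0) key.
rewrite /= mxE => e.
have s1 : 0 <= (map_mx Num.conj (M *m u)^T *m (M *m u)) 0 0.
  by rewrite mxE; apply: sumr_ge0 => j _; rewrite !mxE mulrC -normCK exprn_ge0.
have s2 : 0 <= (map_mx Num.conj u^T *m u) 0 0.
  by rewrite mxE; apply: sumr_ge0 => j _; rewrite !mxE mulrC -normCK exprn_ge0.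
have z : (map_mx Num.conj u^T *m u) 0 0 = 0.
  apply/eqP; rewrite eq_le s2 andbT.
  by rewrite -oppr_ge0 e.
have u0 : u = 0.
  rewrite mxE in z.
  apply/matrixP=> i j; rewrite [j]ord1 mxE.
  have H : (u^t* )%sesqui 0 i * u i 0 = 0.
    apply: (psumr_eq0P _ z) => //= k _; rewrite !mxE mulrC -normCK exprn_ge0 //.
  move: H; rewrite !mxE mulrC -normCK => /eqP; rewrite expf_eq0 /= normr_eq0 => /eqP //.
by apply/eqP; rewrite -subr_eq0 -/u u0.
Qed.
End Tens.


Section FF.
Variables (C : numClosedFieldType) (d1 d2 d3 d4 d5 d6 d7 dE : nat).
Definition F (A1 : 'M[C]_d1) (A2 : 'M[C]_d2) (A3 : 'M[C]_d3) (A4 : 'M[C]_d4)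
  (A5 : 'M[C]_d5) (A6 : 'M[C]_d6) (A7 : 'M[C]_d7) : 'M[C]_(totdim d1 d2 d3 d4 d5 d6 d7 dE) :=
  A1 *t (A2 *t (A3 *t (A4 *t (A5 *t (A6 *t (A7 *t (1%:M : 'M[C]_dE))))))).

Lemma FM A1 A2 A3 A4 A5 A6 A7 B1 B2 B3 B4 B5 B6 B7 :
  F A1 A2 A3 A4 A5 A6 A7 *m F B1 B2 B3 B4 B5 B6 B7 =
  F (A1 *m B1) (A2 *m B2) (A3 *m B3) (A4 *m B4) (A5 *m B5) (A6 *m B6) (A7 *m B7).
Proof. by rewrite /F !tensmx_mul mulmx1. Qed.

Lemma F1 : F 1%:M 1%:M 1%:M 1%:M 1%:M 1%:M 1%:M = 1%:M.
Proof. by rewrite /F ?tens11. Qed.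

Lemma L1F A : lift1 d2 d3 d4 d5 d6 d7 dE A = F A 1%:M 1%:M 1%:M 1%:M 1%:M 1%:M.
Proof. by rewrite /F ?tens11. Qed.
Lemma L2F A : lift2 d1 d3 d4 d5 d6 d7 dE A = F 1%:M A 1%:M 1%:M 1%:M 1%:M 1%:M.
Proof. by rewrite /F ?tens11. Qed.
Lemma L3F A : lift3 d1 d2 d4 d5 d6 d7 dE A = F 1%:M 1%:M A 1%:M 1%:M 1%:M 1%:M.
Proof. by rewrite /F ?tens11. Qed.
Lemma L4F A : lift4 d1 d2 d3 d5 d6 d7 dE A = F 1%:M 1%:M 1%:M A 1%:M 1%:M 1%:M.
Proof. by rewrite /F ?tens11. Qed.
Lemma L5F A : lift5 d1 d2 d3 d4 d6 d7 dE A = F 1%:M 1%:M 1%:M 1%:M A 1%:M 1%:M.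
Proof. by rewrite /F ?tens11. Qed.
Lemma L6F A : lift6 d1 d2 d3 d4 d5 d7 dE A = F 1%:M 1%:M 1%:M 1%:M 1%:M A 1%:M.
Proof. by rewrite /F ?tens11. Qed.
Lemma L7F A : lift7 d1 d2 d3 d4 d5 d6 dE A = F 1%:M 1%:M 1%:M 1%:M 1%:M 1%:M A.
Proof. by rewrite /F ?tens11. Qed.

Lemma hermF A1 A2 A3 A4 A5 A6 A7 :
  hermitian_op A1 -> hermitian_op A2 -> hermitian_op A3 -> hermitian_op A4 ->
  hermitian_op A5 -> hermitian_op A6 -> hermitian_op A7 ->
  hermitian_op (F A1 A2 A3 A4 A5 A6 A7).
Proof. by move=> *; rewrite /F; repeat apply: hermT => //; apply: herm1. Qed.

Lemma FN2 A1 A2 A3 A4 A5 A6 A7 : F A1 (- A2) A3 A4 A5 A6 A7 = - F A1 A2 A3 A4 A5 A6 A7.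
Proof. by rewrite /F !(tensmxNl, tensmxNr). Qed.
Lemma FN3 A1 A2 A3 A4 A5 A6 A7 : F A1 A2 (- A3) A4 A5 A6 A7 = - F A1 A2 A3 A4 A5 A6 A7.
Proof. by rewrite /F !(tensmxNl, tensmxNr). Qed.
Lemma FN5 A1 A2 A3 A4 A5 A6 A7 : F A1 A2 A3 A4 (- A5) A6 A7 = - F A1 A2 A3 A4 A5 A6 A7.
Proof. by rewrite /F !(tensmxNl, tensmxNr). Qed.
Lemma FN7 A1 A2 A3 A4 A5 A6 A7 : F A1 A2 A3 A4 A5 A6 (- A7) = - F A1 A2 A3 A4 A5 A6 A7.
Proof. by rewrite /F !(tensmxNl, tensmxNr). Qed.
Lemma FD1 A1 B1 A2 A3 A4 A5 A6 A7 : F (A1 + B1) A2 A3 A4 A5 A6 A7 = F A1 A2 A3 A4 A5 A6 A7 + F B1 A2 A3 A4 A5 A6 A7.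
Proof. by rewrite /F tensmxDl. Qed.
Lemma FD4 A1 A2 A3 A4 B4 A5 A6 A7 : F A1 A2 A3 (A4 + B4) A5 A6 A7 = F A1 A2 A3 A4 A5 A6 A7 + F A1 A2 A3 B4 A5 A6 A7.
Proof. by rewrite /F tensmxDl !tensmxDr. Qed.
Lemma FD6 A1 A2 A3 A4 A5 A6 B6 A7 : F A1 A2 A3 A4 A5 (A6 + B6) A7 = F A1 A2 A3 A4 A5 A6 A7 + F A1 A2 A3 A4 A5 B6 A7.
Proof. by rewrite /F tensmxDl !tensmxDr. Qed.
Lemma F02 A1 A3 A4 A5 A6 A7 : F A1 0 A3 A4 A5 A6 A7 = 0.
Proof. by rewrite /F tens0mx tensmx0. Qed.
Lemma F03 A1 A2 A4 A5 A6 A7 : F A1 A2 0 A4 A5 A6 A7 = 0.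
Proof. by rewrite /F tens0mx !tensmx0. Qed.
Lemma F05 A1 A2 A3 A4 A6 A7 : F A1 A2 A3 A4 0 A6 A7 = 0.
Proof. by rewrite /F tens0mx !tensmx0. Qed.
Lemma F07 A1 A2 A3 A4 A5 A6 : F A1 A2 A3 A4 A5 A6 0 = 0.
Proof. by rewrite /F tens0mx !tensmx0. Qed.

Lemma anti_lemma N (P P' Q Q' : 'M[C]_N) (v : 'cV[C]_N) :
  Q *m v = P *m v -> Q' *m v = P' *m v -> P *m Q' = Q' *m P ->
  P *m (P' *m v) = Q' *m (Q *m v).
Proof. by move=> h h' c; rewrite -h' mulmxA c -mulmxA h. Qed.

Opaque F.

Lemma sq_lemma N (P Q : 'M[C]_N) (v : 'cV[C]_N) :
  P *m Q *m v = v -> P *m P = 1%:M -> P *m Q = Q *m P ->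
  Q *m v = P *m v /\ Q *m (Q *m v) = v.
Proof.
move=> h hPP hc.
have Qv : Q *m v = P *m v.
  by rewrite -[Q *m v]mul1mx -hPP -mulmxA (mulmxA P Q) h.
split=> //.
by rewrite Qv mulmxA -hc h.
Qed.

Local Notation I := 1%:M.
Ltac fs := rewrite ?FM ?(@mul1mx C d1 d1) ?(@mul1mx C d2 d2) ?(@mul1mx C d3 d3) ?(@mul1mx C d4 d4) ?(@mul1mx C d5 d5) ?(@mul1mx C d6 d6) ?(@mul1mx C d7 d7)
  ?(@mulmx1 C d1 d1) ?(@mulmx1 C d2 d2) ?(@mulmx1 C d3 d3) ?(@mulmx1 C d4 d4) ?(@mulmx1 C d5 d5) ?(@mulmx1 C d6 d6) ?(@mulmx1 C d7 d7).

Lemma squares (X1 : 'M[C]_d1) X2 X3 (X4 : 'M[C]_d4) X5 (X6 : 'M[C]_d6) X7 (psi : 'cV[C]_(totdim d1 d2 d3 d4 d5 d6 d7 dE)) :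
  hermitian_op X2 -> hermitian_op X3 -> hermitian_op X5 -> hermitian_op X7 ->
  X1 *m X1 = I -> X4 *m X4 = I -> X6 *m X6 = I ->
  F I I I X4 X5 X6 X7 *m psi = psi -> F I X2 X3 I I X6 X7 *m psi = psi ->
  F X1 I X3 I X5 I X7 *m psi = psi -> F X1 X2 I I X5 X6 I *m psi = psi ->
  [/\ F I (X2 *m X2) I I I I I *m psi = psi, F I I (X3 *m X3) I I I I *m psi = psi,
      F I I I I (X5 *m X5) I I *m psi = psi & F I I I I I I (X7 *m X7) *m psi = psi].
Proof.
move=> h2 h3 h5 h7 s1 s4 s6 S1 S2 S3 S4.
destruct (@sq_lemma _ (F I I I X4 I X6 I) (F I I I I X5 I X7) psi) as [_ h57]; [by fs | by fs; rewrite ?s1 ?s4 ?s6 F1 | by fs |].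
destruct (@sq_lemma _ (F I I I I I X6 I) (F I X2 X3 I I I X7) psi) as [_ h237]; [by fs | by fs; rewrite ?s1 ?s4 ?s6 F1 | by fs |].
destruct (@sq_lemma _ (F X1 I I I I I I) (F I I X3 I X5 I X7) psi) as [_ h357]; [by fs | by fs; rewrite ?s1 ?s4 ?s6 F1 | by fs |].
destruct (@sq_lemma _ (F X1 I I I I X6 I) (F I X2 I I X5 I I) psi) as [_ h25]; [by fs | by fs; rewrite ?s1 ?s4 ?s6 F1 | by fs |].
move: h57 h237 h357 h25; rewrite ![F _ _ _ _ _ _ _ *m (_ *m psi)]mulmxA; fs => h57 h237 h357 h25.
have g3 : F I I (X3 *m X3) I I I I *m psi = psi.
  by rewrite -{1}h57 [F _ _ _ _ _ _ _ *m (_ *m psi)]mulmxA; fs; exact: h357.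
have g27 : F I (X2 *m X2) I I I I (X7 *m X7) *m psi = psi.
  by rewrite -{1}g3 [F _ _ _ _ _ _ _ *m (_ *m psi)]mulmxA; fs; exact: h237.
have e5 : F I I I I (X5 *m X5) I I *m psi = F I (X2 *m X2) I I (X5 *m X5) I (X7 *m X7) *m psi.
  by rewrite -{1}g27 [F _ _ _ _ _ _ _ *m (_ *m psi)]mulmxA; fs.
have e2 : F I (X2 *m X2) I I I I I *m psi = F I (X2 *m X2) I I (X5 *m X5) I (X7 *m X7) *m psi.
  by rewrite -{1}h57 [F _ _ _ _ _ _ _ *m (_ *m psi)]mulmxA; fs.
have e7 : F I I I I I I (X7 *m X7) *m psi = F I (X2 *m X2) I I (X5 *m X5) I (X7 *m X7) *m psi.
  by rewrite -{1}h25 [F _ _ _ _ _ _ _ *m (_ *m psi)]mulmxA; fs.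
have hF5 : hermitian_op (F I I I I X5 I I) by apply: hermF; solve [exact: herm1 | assumption].
have hF2 : hermitian_op (F I X2 I I I I I) by apply: hermF; solve [exact: herm1 | assumption].
have hF7 : hermitian_op (F I I I I I I X7) by apply: hermF; solve [exact: herm1 | assumption].
split.
- have := @pos_sq C _ _ psi hF2; fs; move=> H; apply: H.
  by rewrite e2 -e5 [F _ _ _ _ _ _ _ *m (_ *m psi)]mulmxA; fs; exact: h25.
- exact: g3.
- have := @pos_sq C _ _ psi hF5; fs; move=> H; apply: H.
  by rewrite e5 -e7 [F _ _ _ _ _ _ _ *m (_ *m psi)]mulmxA; fs; exact: h57.
- have := @pos_sq C _ _ psi hF7; fs; move=> H; apply: H.
  by rewrite e7 -e5 [F _ _ _ _ _ _ _ *m (_ *m psi)]mulmxA; fs; exact: h57.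
Qed.
End FF.


Arguments F {C d1 d2 d3 d4 d5 d6 d7 dE}.
Opaque F.

Ltac fsd d1 d2 d3 d4 d5 d6 d7 := rewrite ?FM ?(@mul1mx _ d1 d1) ?(@mul1mx _ d2 d2) ?(@mul1mx _ d3 d3) ?(@mul1mx _ d4 d4) ?(@mul1mx _ d5 d5) ?(@mul1mx _ d6 d6) ?(@mul1mx _ d7 d7)
  ?(@mulmx1 _ d1 d1) ?(@mulmx1 _ d2 d2) ?(@mulmx1 _ d3 d3) ?(@mulmx1 _ d4 d4) ?(@mulmx1 _ d5 d5) ?(@mulmx1 _ d6 d6) ?(@mulmx1 _ d7 d7).
Ltac fsdin d1 d2 d3 d4 d5 d6 d7 H := rewrite ?FM ?(@mul1mx _ d1 d1) ?(@mul1mx _ d2 d2) ?(@mul1mx _ d3 d3) ?(@mul1mx _ d4 d4) ?(@mul1mx _ d5 d5) ?(@mul1mx _ d6 d6) ?(@mul1mx _ d7 d7)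
  ?(@mulmx1 _ d1 d1) ?(@mulmx1 _ d2 d2) ?(@mulmx1 _ d3 d3) ?(@mulmx1 _ d4 d4) ?(@mulmx1 _ d5 d5) ?(@mulmx1 _ d6 d6) ?(@mulmx1 _ d7 d7) in H.

Theorem mainTheorem5 (C : numClosedFieldType) (d1 d2 d3 d4 d5 d6 d7 dE : nat)
  (psi : 'cV[C]_(totdim d1 d2 d3 d4 d5 d6 d7 dE))
  (X1 Z1 : 'M[C]_d1) (X2 Z2 : 'M[C]_d2) (X3 Z3 : 'M[C]_d3) (X4 Z4 : 'M[C]_d4)
  (X5 Z5 : 'M[C]_d5) (X6 Z6 : 'M[C]_d6) (X7 Z7 : 'M[C]_d7) :
  hermitian_op X1 -> hermitian_op Z1 -> hermitian_op X2 -> hermitian_op Z2 ->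
  hermitian_op X3 -> hermitian_op Z3 -> hermitian_op X4 -> hermitian_op Z4 ->
  hermitian_op X5 -> hermitian_op Z5 -> hermitian_op X6 -> hermitian_op Z6 ->
  hermitian_op X7 -> hermitian_op Z7 ->
  let L1 := lift1 d2 d3 d4 d5 d6 d7 dE in
  let L2 := lift2 d1 d3 d4 d5 d6 d7 dE in
  let L3 := lift3 d1 d2 d4 d5 d6 d7 dE in
  let L4 := lift4 d1 d2 d3 d5 d6 d7 dE in
  let L5 := lift5 d1 d2 d3 d4 d6 d7 dE in
  let L6 := lift6 d1 d2 d3 d4 d5 d7 dE in
  let L7 := lift7 d1 d2 d3 d4 d5 d6 dE in
  let S1 := L4 X4 *m L5 X5 *m L6 X6 *m L7 X7 in
  let S2 := L2 X2 *m L3 X3 *m L6 X6 *m L7 X7 in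
  let S3 := L1 X1 *m L3 X3 *m L5 X5 *m L7 X7 in
  let S4 := L1 X1 *m L2 X2 *m L5 X5 *m L6 X6 in
  let S5 := L4 Z4 *m L5 Z5 *m L6 Z6 *m L7 Z7 in
  let S6 := L2 Z2 *m L3 Z3 *m L6 Z6 *m L7 Z7 in
  let S7 := L1 Z1 *m L3 Z3 *m L5 Z5 *m L7 Z7 in
  let S8 := L1 Z1 *m L2 Z2 *m L5 Z5 *m L6 Z6 in
  (* (i) anticommutation on factors 2,3,5,7 *)
  X2 *m Z2 + Z2 *m X2 = 0 -> X3 *m Z3 + Z3 *m X3 = 0 ->
  X5 *m Z5 + Z5 *m X5 = 0 -> X7 *m Z7 + Z7 *m X7 = 0 ->
  (* (ii) stabilizer conditions *)
  S1 *m psi = psi -> S2 *m psi = psi -> S3 *m psi = psi -> S4 *m psi = psi ->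
  S5 *m psi = psi -> S6 *m psi = psi -> S7 *m psi = psi -> S8 *m psi = psi ->
  (* (iii) squares are identity on factors 1,4,6 *)
  X1 *m X1 = 1%:M -> Z1 *m Z1 = 1%:M -> X4 *m X4 = 1%:M -> Z4 *m Z4 = 1%:M ->
  X6 *m X6 = 1%:M -> Z6 *m Z6 = 1%:M ->
  local_conclusion L1 X1 Z1 psi /\ local_conclusion L2 X2 Z2 psi /\
  local_conclusion L3 X3 Z3 psi /\ local_conclusion L4 X4 Z4 psi /\
  local_conclusion L5 X5 Z5 psi /\ local_conclusion L6 X6 Z6 psi /\
  local_conclusion L7 X7 Z7 psi.
Proof.
move=> hX1 hZ1 hX2 hZ2 hX3 hZ3 hX4 hZ4 hX5 hZ5 hX6 hZ6 hX7 hZ7.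
cbv zeta.
move=> ac2 ac3 ac5 ac7 H1 H2 H3 H4 H5 H6 H7 H8 sx1 sz1 sx4 sz4 sx6 sz6.
rewrite /local_conclusion.
rewrite ?L1F ?L2F ?L3F ?L4F ?L5F ?L6F ?L7F in H1 H2 H3 H4 H5 H6 H7 H8 *.
fsdin d1 d2 d3 d4 d5 d6 d7 H1; fsdin d1 d2 d3 d4 d5 d6 d7 H2; fsdin d1 d2 d3 d4 d5 d6 d7 H3; fsdin d1 d2 d3 d4 d5 d6 d7 H4.
fsdin d1 d2 d3 d4 d5 d6 d7 H5; fsdin d1 d2 d3 d4 d5 d6 d7 H6; fsdin d1 d2 d3 d4 d5 d6 d7 H7; fsdin d1 d2 d3 d4 d5 d6 d7 H8.
have [qx2 qx3 qx5 qx7] := @squares C d1 d2 d3 d4 d5 d6 d7 dE X1 X2 X3 X4 X5 X6 X7 psi hX2 hX3 hX5 hX7 sx1 sx4 sx6 H1 H2 H3 H4.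
have [qz2 qz3 qz5 qz7] := @squares C d1 d2 d3 d4 d5 d6 d7 dE Z1 Z2 Z3 Z4 Z5 Z6 Z7 psi hZ2 hZ3 hZ5 hZ7 sz1 sz4 sz6 H5 H6 H7 H8.
destruct (@sq_lemma C _ (F X1 1%:M 1%:M 1%:M 1%:M 1%:M 1%:M) (F 1%:M 1%:M X3 1%:M X5 1%:M X7) psi) as [rx1 _]; [by fsd d1 d2 d3 d4 d5 d6 d7 | by fsd d1 d2 d3 d4 d5 d6 d7; rewrite sx1 F1 | by fsd d1 d2 d3 d4 d5 d6 d7 |].
destruct (@sq_lemma C _ (F Z1 1%:M 1%:M 1%:M 1%:M 1%:M 1%:M) (F 1%:M 1%:M Z3 1%:M Z5 1%:M Z7) psi) as [rz1 _]; [by fsd d1 d2 d3 d4 d5 d6 d7 | by fsd d1 d2 d3 d4 d5 d6 d7; rewrite sz1 F1 | by fsd d1 d2 d3 d4 d5 d6 d7 |].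
destruct (@sq_lemma C _ (F 1%:M 1%:M 1%:M 1%:M 1%:M X6 1%:M) (F 1%:M X2 X3 1%:M 1%:M 1%:M X7) psi) as [rx6 _]; [by fsd d1 d2 d3 d4 d5 d6 d7 | by fsd d1 d2 d3 d4 d5 d6 d7; rewrite sx6 F1 | by fsd d1 d2 d3 d4 d5 d6 d7 |].
destruct (@sq_lemma C _ (F 1%:M 1%:M 1%:M 1%:M 1%:M Z6 1%:M) (F 1%:M Z2 Z3 1%:M 1%:M 1%:M Z7) psi) as [rz6 _]; [by fsd d1 d2 d3 d4 d5 d6 d7 | by fsd d1 d2 d3 d4 d5 d6 d7; rewrite sz6 F1 | by fsd d1 d2 d3 d4 d5 d6 d7 |].
destruct (@sq_lemma C _ (F 1%:M 1%:M 1%:M X4 1%:M 1%:M 1%:M) (F 1%:M 1%:M 1%:M 1%:M X5 X6 X7) psi) as [rx4 _]; [by fsd d1 d2 d3 d4 d5 d6 d7 | by fsd d1 d2 d3 d4 d5 d6 d7; rewrite sx4 F1 | by fsd d1 d2 d3 d4 d5 d6 d7 |].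
destruct (@sq_lemma C _ (F 1%:M 1%:M 1%:M Z4 1%:M 1%:M 1%:M) (F 1%:M 1%:M 1%:M 1%:M Z5 Z6 Z7) psi) as [rz4 _]; [by fsd d1 d2 d3 d4 d5 d6 d7 | by fsd d1 d2 d3 d4 d5 d6 d7; rewrite sz4 F1 | by fsd d1 d2 d3 d4 d5 d6 d7 |].
have a1 := @anti_lemma C _ _ (F Z1 1%:M 1%:M 1%:M 1%:M 1%:M 1%:M) _ _ psi rx1 rz1 ltac:(by fsd d1 d2 d3 d4 d5 d6 d7).
have b1 := @anti_lemma C _ _ (F X1 1%:M 1%:M 1%:M 1%:M 1%:M 1%:M) _ _ psi rz1 rx1 ltac:(by fsd d1 d2 d3 d4 d5 d6 d7).
have a6 := @anti_lemma C _ _ (F 1%:M 1%:M 1%:M 1%:M 1%:M Z6 1%:M) _ _ psi rx6 rz6 ltac:(by fsd d1 d2 d3 d4 d5 d6 d7).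
have b6 := @anti_lemma C _ _ (F 1%:M 1%:M 1%:M 1%:M 1%:M X6 1%:M) _ _ psi rz6 rx6 ltac:(by fsd d1 d2 d3 d4 d5 d6 d7).
have a4 := @anti_lemma C _ _ (F 1%:M 1%:M 1%:M Z4 1%:M 1%:M 1%:M) _ _ psi rx4 rz4 ltac:(by fsd d1 d2 d3 d4 d5 d6 d7).
have b4 := @anti_lemma C _ _ (F 1%:M 1%:M 1%:M X4 1%:M 1%:M 1%:M) _ _ psi rz4 rx4 ltac:(by fsd d1 d2 d3 d4 d5 d6 d7).
move: a1 b1 a6 b6 a4 b4.
rewrite ![F _ _ _ _ _ _ _ *m (_ *m psi)]mulmxA; fsd d1 d2 d3 d4 d5 d6 d7 => a1 b1 a6 b6 a4 b4.
have n2 : Z2 *m X2 = - (X2 *m Z2) by apply/eqP; rewrite -addr_eq0 addrC ac2.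
have n3 : Z3 *m X3 = - (X3 *m Z3) by apply/eqP; rewrite -addr_eq0 addrC ac3.
have n5 : Z5 *m X5 = - (X5 *m Z5) by apply/eqP; rewrite -addr_eq0 addrC ac5.
have n7 : Z7 *m X7 = - (X7 *m Z7) by apply/eqP; rewrite -addr_eq0 addrC ac7.
have c6 : F 1%:M 1%:M 1%:M 1%:M 1%:M (X6 *m Z6) 1%:M *m psi + F 1%:M 1%:M 1%:M 1%:M 1%:M (Z6 *m X6) 1%:M *m psi = 0.
  by rewrite a6 b6 n2 n3 n7 FN2 FN3 FN7 !opprK mulNmx addNr.
split; [|split; [|split; [|split; [|split; [|split]]]]].
- split.
  + by rewrite sx1 F1 mul1mx.
  + by rewrite sz1 F1 mul1mx.
  + by rewrite FD1 mulmxDl a1 b1 n3 n5 n7 FN3 FN5 FN7 !opprK mulNmx addNr.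
- split; [exact: qx2 | exact: qz2 | by rewrite ac2 F02 mul0mx].
- split; [exact: qx3 | exact: qz3 | by rewrite ac3 F03 mul0mx].
- split.
  + by rewrite sx4 F1 mul1mx.
  + by rewrite sz4 F1 mul1mx.
  + rewrite FD4 mulmxDl a4 b4 n5 n7 FN5 FN7 opprK -mulmxDl -FD6.
    rewrite (_ : F 1%:M 1%:M 1%:M 1%:M (X5 *m Z5) (Z6 *m X6 + X6 *m Z6) (X7 *m Z7) =
       F 1%:M 1%:M 1%:M 1%:M (X5 *m Z5) 1%:M (X7 *m Z7) *m F 1%:M 1%:M 1%:M 1%:M 1%:M (Z6 *m X6 + X6 *m Z6) 1%:M); last by fsd d1 d2 d3 d4 d5 d6 d7.
    by rewrite -mulmxA FD6 mulmxDl addrC c6 mulmx0.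
- split; [exact: qx5 | exact: qz5 | by rewrite ac5 F05 mul0mx].
- split.
  + by rewrite sx6 F1 mul1mx.
  + by rewrite sz6 F1 mul1mx.
  + by rewrite FD6 mulmxDl.
- split; [exact: qx7 | exact: qz7 | by rewrite ac7 F07 mul0mx].
Qed.
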